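(* Let $A\in\mathbb{R}^{n\times n}$ be symmetric positive semidefinite and $b\in\mathbb{R}^n$. Apply the $CD$ method (described in the context) to $Ay=b$ with starting point $y_0\in\mathbb{R}^n$ and real parameters $\gamma_i\neq0$, and assume it runs without breakdown (all denominators nonzero) and produces $y_0,\dots,y_{m+1}$, $r_0,\dots,r_m$ (all nonzero) and $p_0,\dots,p_m$, with $m+1\le n$ and $Ay_{m+1}=b$. Let $y^\ast$ be any solution of $Ay=b$, let $f(y)=\tfrac12(y-y^\ast)^TA(y-y^\ast)$, and for $i\in\{1,\dots,m\}$ let $g_i(y)=\tfrac12(y-y_i)^TA(y-y_i)$. Then: (1) the minimum of $g_1$ over the line $\{y_1+\gamma_0Ap_0+tp_0:\ t\in\mathbb{R}\}$ is attained at $t=-\sigma_0$; (2) for each $i=2,\dots,m$, the minimum of $g_i$ over the two-dimensional affine set $\{y_i+\gamma_{i-1}Ap_{i-1}+sp_{i-1}+tp_{i-2}:\ s,t\in\mathbb{R}\}$ is attained at $(s,t)=(-\sigma_{i-1},-\omega_{i-1})$; (3) for $i=1,\dots,m$, $$f(y_i+a_ip_i)=f(y_i)-\frac12\left(\frac{\gamma_{i-1}}{a_{i-1}}\right)^2\frac{\|r_i\|^4}{p_i^TAp_i};$$ (4) with $A^+$ the Moore–Penrose pseudoinverse of $A$, $$\left[A^+-\sum_{i=0}^m\frac{p_ip_i^T}{p_i^TAp_i}\right]r_0=0.$$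
   Context: The $CD$ method for solving $Ay=b$, with starting point $y_0\in\mathbb{R}^n$ and nonzero real parameters $\gamma_0,\gamma_1,\dots$, is the following iteration (all norms Euclidean). Set $r_0=b-Ay_0$; if $r_0=0$ stop; set $p_0=r_0$. For $k=0,1,2,\dots$: compute $a_k=\dfrac{r_k^Tp_k}{p_k^TAp_k}$, $y_{k+1}=y_k+a_kp_k$, $r_{k+1}=r_k-a_kAp_k$; if $r_{k+1}=0$ stop; otherwise set $\sigma_k=\gamma_k\dfrac{\|Ap_k\|^2}{p_k^TAp_k}$ and, if $k=0$, $p_1=\gamma_0Ap_0-\sigma_0p_0$, while if $k\ge1$, $\omega_k=\gamma_k\dfrac{(Ap_k)^T(Ap_{k-1})}{p_{k-1}^TAp_{k-1}}$ and $p_{k+1}=\gamma_kAp_k-\sigma_kp_k-\omega_kp_{k-1}$. *)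

(* Defs.v *)
From HB Require Import structures.
From mathcomp Require Import all_boot all_order all_algebra.
From mathcomp Require Import reals.
Set Implicit Arguments. Unset Strict Implicit. Unset Printing Implicit Defensive.
Import Order.TTheory GRing.Theory Num.Theory.
Local Open Scope ring_scope.

Section CD.
Variables (R : realType) (n : nat).

Definition dotv (x y : 'cV[R]_n) : R := (x^T *m y) 0 0.
Definition normv (x : 'cV[R]_n) : R := Num.sqrt (dotv x x).

Definition sym_psd (A : 'M[R]_n) : Prop :=
  A^T = A /\ forall x : 'cV[R]_n, 0 <= dotv x (A *m x).

(* X is the Moore--Penrose pseudoinverse of A (the four Penrose equations,
   which determine it uniquely) *)
Definition is_MP_pinv (A X : 'M[R]_n) : Prop :=
  [/\ A *m X *m A = A, X *m A *m X = X,
      (A *m X)^T = A *m X & (X *m A)^T = X *m A].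

Definition cd_a (A : 'M[R]_n) (r p : nat -> 'cV[R]_n) (k : nat) : R :=
  dotv (r k) (p k) / dotv (p k) (A *m p k).
Definition cd_sigma (A : 'M[R]_n) (gamma : nat -> R) (p : nat -> 'cV[R]_n)
  (k : nat) : R :=
  gamma k * dotv (A *m p k) (A *m p k) / dotv (p k) (A *m p k).
Definition cd_omega (A : 'M[R]_n) (gamma : nat -> R) (p : nat -> 'cV[R]_n)
  (k : nat) : R :=
  gamma k * dotv (A *m p k) (A *m p k.-1) / dotv (p k.-1) (A *m p k.-1).

Definition CD_run (A : 'M[R]_n) (b : 'cV[R]_n) (gamma : nat -> R)
  (y r p : nat -> 'cV[R]_n) (m : nat) : Prop :=
  r 0%N = b - A *m y 0%N /\
  p 0%N = r 0%N /\
  (forall k, (k <= m)%N -> r k != 0) /\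
  (forall k, (k <= m)%N -> dotv (p k) (A *m p k) != 0) /\
  (forall k, (k <= m)%N -> y k.+1 = y k + cd_a A r p k *: p k) /\
  (forall k, (k < m)%N -> r k.+1 = r k - cd_a A r p k *: (A *m p k)) /\
      ((0 < m)%N -> p 1%N = gamma 0%N *: (A *m p 0%N)
                              - cd_sigma A gamma p 0%N *: p 0%N) /\
      (forall k, (1 <= k)%N -> (k < m)%N ->
         p k.+1 = gamma k *: (A *m p k) - cd_sigma A gamma p k *: p k
                  - cd_omega A gamma p k *: p k.-1) /\
  A *m y m.+1 = b.

End CD.

(* Main.v *)
Require Import Defs.
From HB Require Import structures.
From mathcomp Require Import all_boot all_order all_algebra.
From mathcomp Require Import reals ring lra zify.
Import Order.TTheory GRing.Theory Num.Theory.
Set Implicit Arguments. Unset Strict Implicit.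
Local Open Scope ring_scope.
Lemma dotvE (R : realType) n (x y : 'cV[R]_n) : dotv x y = \sum_i x i 0 * y i 0.
Proof. by rewrite /dotv !mxE; apply: eq_bigr => i _; rewrite mxE. Qed.

Lemma dotvC (R : realType) n (x y : 'cV[R]_n) : dotv x y = dotv y x.
Proof. by rewrite !dotvE; apply: eq_bigr => i _; rewrite mulrC. Qed.

Lemma dotvDl (R : realType) n (x z y : 'cV[R]_n) : dotv (x + z) y = dotv x y + dotv z y.
Proof. by rewrite !dotvE -big_split; apply: eq_bigr => i _; rewrite mxE mulrDl. Qed.
Lemma dotvDr (R : realType) n (x z y : 'cV[R]_n) : dotv y (x + z) = dotv y x + dotv y z.
Proof. by rewrite dotvC dotvDl !(dotvC y). Qed.
Lemma dotvZl (R : realType) n (c : R) (x y : 'cV[R]_n) : dotv (c *: x) y = c * dotv x y.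
Proof. by rewrite !dotvE mulr_sumr; apply: eq_bigr => i _; rewrite mxE mulrA. Qed.
Lemma dotvZr (R : realType) n (c : R) (x y : 'cV[R]_n) : dotv y (c *: x) = c * dotv y x.
Proof. by rewrite dotvC dotvZl dotvC. Qed.
Lemma dotvNl (R : realType) n (x y : 'cV[R]_n) : dotv (- x) y = - dotv x y.
Proof. by rewrite -scaleN1r dotvZl mulN1r. Qed.
Lemma dotvNr (R : realType) n (x y : 'cV[R]_n) : dotv y (- x) = - dotv y x.
Proof. by rewrite -scaleN1r dotvZr mulN1r. Qed.
Lemma dotvBl (R : realType) n (x z y : 'cV[R]_n) : dotv (x - z) y = dotv x y - dotv z y.
Proof. by rewrite dotvDl dotvNl. Qed.
Lemma dotvBr (R : realType) n (x z y : 'cV[R]_n) : dotv y (x - z) = dotv y x - dotv y z.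
Proof. by rewrite dotvDr dotvNr. Qed.

Lemma dotv_sym (R : realType) n (A : 'M[R]_n) (x y : 'cV[R]_n) :
  A^T = A -> dotv x (A *m y) = dotv (A *m x) y.
Proof. by move=> HA; rewrite /dotv mulmxA trmx_mul HA. Qed.

Lemma dotv_ge0 (R : realType) n (x : 'cV[R]_n) : 0 <= dotv x x.
Proof. by rewrite dotvE; apply: sumr_ge0 => i _; rewrite -expr2 sqr_ge0. Qed.

Lemma dotv_eq0 (R : realType) n (x : 'cV[R]_n) : dotv x x = 0 -> x = 0.
Proof.
rewrite dotvE => /eqP; rewrite psumr_eq0; last by move=> i _; rewrite -expr2 sqr_ge0.
move=> /allP H; apply/matrixP => i j; rewrite ord1 mxE.
have := H i (mem_index_enum i); rewrite /= -expr2 sqrf_eq0 => /eqP ->.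
by [].
Qed.

Lemma quad_min (R : realType) n (A : 'M[R]_n) (x v : 'cV[R]_n) :
  sym_psd A -> dotv x (A *m v) = 0 ->
  dotv x (A *m x) <= dotv (x + v) (A *m (x + v)).
Proof.
move=> [HA Hp] H0.
rewrite mulmxDr !dotvDl !dotvDr H0.
have -> : dotv v (A *m x) = 0 by rewrite dotv_sym // dotvC.
have := Hp v; lra.
Qed.

Theorem theorem3 (R : realType) (n m : nat) (A : 'M[R]_n) (b : 'cV[R]_n)
  (gamma : nat -> R) (y r p : nat -> 'cV[R]_n) (ystar : 'cV[R]_n) :
  sym_psd A ->
  (forall k, gamma k != 0) ->
  CD_run A b gamma y r p m ->
  (m.+1 <= n)%N ->
  A *m ystar = b ->
  let f := fun z : 'cV[R]_n => 2^-1 * dotv (z - ystar) (A *m (z - ystar)) in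
  let g := fun (i : nat) (z : 'cV[R]_n) =>
             2^-1 * dotv (z - y i) (A *m (z - y i)) in
  (* (1) *)
  ((0 < m)%N -> forall t : R,
     g 1%N (y 1%N + gamma 0%N *: (A *m p 0%N) - cd_sigma A gamma p 0%N *: p 0%N)
     <= g 1%N (y 1%N + gamma 0%N *: (A *m p 0%N) + t *: p 0%N))
  /\
  (* (2) *)
  (forall i, (2 <= i)%N -> (i <= m)%N -> forall s t : R,
     g i (y i + gamma i.-1 *: (A *m p i.-1)
            - cd_sigma A gamma p i.-1 *: p i.-1
            - cd_omega A gamma p i.-1 *: p i.-2)
     <= g i (y i + gamma i.-1 *: (A *m p i.-1) + s *: p i.-1 + t *: p i.-2))
  /\
  (* (3) *)
  (forall i, (1 <= i)%N -> (i <= m)%N ->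
     f (y i + cd_a A r p i *: p i)
     = f (y i) - 2^-1 * (gamma i.-1 / cd_a A r p i.-1) ^+ 2
                   * normv (r i) ^+ 4 / dotv (p i) (A *m p i))
  /\
  (* (4) *)
  (forall X : 'M[R]_n, is_MP_pinv A X ->
     (X - \sum_(i < m.+1) (dotv (p i) (A *m p i))^-1 *: (p i *m (p i)^T))
       *m r 0%N = 0).
Proof.
move=> Hsym Hg [Hr0 [Hp0 [Hrnz [Hd [Hy [Hr [Hp1 [Hpk Hend]]]]]]]] Hm Hys f g.
have HA := Hsym.1.
pose w k := if k is 0 then 0 else cd_omega A gamma p k.
have pstep : forall k, (k < m)%N -> p k.+1 = gamma k *: (A *m p k)
    - cd_sigma A gamma p k *: p k - w k *: p k.-1.
  case=> [|k] hk /=; last exact: Hpk.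
  by rewrite scale0r subr0; exact: Hp1.
have Ap : forall k, (k < m)%N -> A *m p k = (gamma k)^-1 *:
    (p k.+1 + cd_sigma A gamma p k *: p k + w k *: p k.-1).
  move=> k hk; rewrite pstep //; apply/matrixP => i j; rewrite !mxE.
  by field; apply: Hg.
have conjlt : forall N k, (k <= N)%N -> (k <= m)%N -> forall j, (j < k)%N ->
    dotv (p j) (A *m p k) = 0.
  elim=> [|N IH] [|k] //= hkN hkm j hjk.
  have IH' : forall k', (k' <= k)%N -> forall j', (j' < k')%N ->
      dotv (p j') (A *m p k') = 0.
    move=> k' hk' j' hj'; apply: IH hj'; [exact: leq_trans hk' hkN|].
    by apply: leq_trans hk' (ltnW hkm).
  rewrite (pstep k hkm) !mulmxBr -!scalemxAr !dotvBr !dotvZr.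
  have [ejk|ljk] : j = k \/ (j < k)%N by move: hjk; rewrite ltnS leq_eqVlt => /orP [/eqP|]; auto.
  - subst j.
    have -> : w k * dotv (p k) (A *m p k.-1) = 0.
      case: k {IH' hkN hkm hjk} (IH' k (leqnn k)) => [|k] IH'' /=; first by rewrite mul0r.
      by rewrite dotv_sym // dotvC IH'' // mulr0.
    rewrite (dotv_sym (p k)) // /cd_sigma; field; exact: Hd (ltnW hkm).
  - case: k hkN hkm hjk ljk IH' => [|k] // hkN hkm hjk ljk IH' /=.
    have [ejk|ljk'] : j = k \/ (j < k)%N by move: ljk; rewrite ltnS leq_eqVlt => /orP [/eqP|]; auto.
    + subst j. rewrite (IH' k.+1) // mulr0 subr0 (dotv_sym (p k)) //.
      rewrite /cd_omega /= dotvC; field; apply: Hd; exact: leq_trans (leqnSn _) (ltnW hkm).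
    + rewrite (IH' k.+1) // (IH' k) // !mulr0 !subr0 (dotv_sym (p j)) //.
      have hjm : (j < m)%N by apply: leq_trans ljk' (leq_trans (leqnSn _) (ltnW hkm)).
      rewrite (Ap j hjm) dotvZl !dotvDl !dotvZl !(IH' k.+1) ?mulr0 ?addr0 //.
      all: try lia. by rewrite !mulr0.
have conj : forall i j, (i <= m)%N -> (j <= m)%N -> i != j ->
    dotv (p i) (A *m p j) = 0.
  move=> i j hi hj; rewrite neq_ltn => /orP [hij|hji]; first exact: (conjlt j j (leqnn j) hj i hij).
  by rewrite dotv_sym // dotvC (conjlt i i (leqnn i) hi j hji).
have dpos : forall k, (k <= m)%N -> dotv (p k) (A *m p k) != 0 := Hd.
have rY : forall k, (k <= m)%N -> r k = b - A *m y k.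
  elim=> [|k IH] hk; first exact: Hr0.
  rewrite Hr // Hy ?(ltnW hk) // IH ?(ltnW hk) // mulmxDr -scalemxAr.
  by rewrite opprD addrA.
have orth : forall k, (k <= m)%N -> forall j, (j < k)%N -> dotv (p j) (r k) = 0.
  elim=> [|k IH] // hk j hj; rewrite Hr // dotvBr dotvZr.
  have [ejk|ljk] : j = k \/ (j < k)%N by move: hj; rewrite ltnS leq_eqVlt => /orP [/eqP|]; auto.
  - subst j; rewrite /cd_a dotvC; field; exact: Hd (ltnW hk).
  - rewrite IH ?(ltnW hk) // conj ?mulr0 ?subr0 //; try lia.
have S : forall k, (k <= m)%N -> forall v, (forall j, (j <= k)%N -> dotv (p j) v = 0) ->
    dotv (r k) v = 0.
  elim=> [|k IH] hk v H; first by rewrite -Hp0 H.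
  rewrite Hr // dotvBl dotvZl IH ?(ltnW hk) //; last by move=> j hj; apply: H; lia.
  rewrite Ap // !dotvZl !dotvDl !dotvZl !H ?mulr0 ?addr0 ?subr0 //; try lia. by rewrite !mulr0 subr0.
have pr0 : forall j k, (j <= k)%N -> (k <= m)%N -> dotv (p k) (r j) = dotv (p k) (r 0%N).
  elim=> [|j IH] k hj hk //.
  rewrite Hr; last lia.
  rewrite dotvBr dotvZr conj ?mulr0 ?subr0; try lia.
  by apply: IH => //; lia.
have hval : forall k, (k < m)%N -> cd_a A r p k * dotv (p k.+1) (r k.+1)
    = - gamma k * dotv (r k.+1) (r k.+1).
  move=> k hk.
  have e : dotv (r k.+1) (r k.+1) = - cd_a A r p k * dotv (A *m p k) (r k.+1).
    rewrite {1}(Hr k hk) dotvBl dotvZl S; first ring; first lia.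
    by move=> j hj; apply: orth => //; lia.
  rewrite e (pstep k hk) !dotvBl !dotvZl !orth; try lia.
  ring.
have anz : forall k, (k <= m)%N -> cd_a A r p k != 0.
  elim=> [|k IH] hk.
    rewrite /cd_a -Hp0 mulf_neq0 ?invr_neq0 ?Hd //.
    by apply/eqP => /dotv_eq0 /eqP; rewrite Hp0; apply/negP; exact: (Hrnz 0%N (leq0n m)).
  rewrite /cd_a mulf_neq0 ?invr_neq0 ?Hd //.
  apply/eqP => h0.
  have := hval k hk; rewrite dotvC h0 mulr0 => /esym /eqP.
  rewrite mulf_eq0 oppr_eq0 (negbTE (Hg k)) /= => /eqP /dotv_eq0 /eqP.
  by apply/negP; apply: Hrnz.
have half0 : (0 : R) <= 2^-1 by rewrite invr_ge0 ler0n.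
split; [|split; [|split]].
- move=> hm t; rewrite /g.
  have e1 : y 1%N + gamma 0%N *: (A *m p 0%N) - cd_sigma A gamma p 0 *: p 0%N - y 1%N
      = p 1%N by rewrite (Hp1 hm); apply/matrixP=> i j; rewrite !mxE; ring.
  have e2 : y 1%N + gamma 0%N *: (A *m p 0%N) + t *: p 0%N - y 1%N
      = p 1%N + (t + cd_sigma A gamma p 0) *: p 0%N.
    by rewrite (Hp1 hm); apply/matrixP=> i j; rewrite !mxE; ring.
  rewrite e1 e2 ler_wpM2l //; apply: quad_min => //.
  by rewrite -scalemxAr dotvZr conj ?mulr0.
- move=> i hi2 him s t; case: i hi2 him => [|[|k]] // hi2 him /=; rewrite /g.
  have e1 : y k.+2 + gamma k.+1 *: (A *m p k.+1) - cd_sigma A gamma p k.+1 *: p k.+1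
      - cd_omega A gamma p k.+1 *: p k - y k.+2 = p k.+2.
    by rewrite (pstep k.+1 him) /=; apply/matrixP=> i j; rewrite !mxE; ring.
  have e2 : y k.+2 + gamma k.+1 *: (A *m p k.+1) + s *: p k.+1 + t *: p k - y k.+2
      = p k.+2 + ((s + cd_sigma A gamma p k.+1) *: p k.+1
                  + (t + cd_omega A gamma p k.+1) *: p k).
    by rewrite (pstep k.+1 him) /=; apply/matrixP=> i j; rewrite !mxE; ring.
  rewrite e1 e2 ler_wpM2l //; apply: quad_min => //.
  rewrite mulmxDr -!scalemxAr dotvDr !dotvZr !conj ?mulr0 ?addr0 //; lia.
- move=> i hi1 him; rewrite /f; case: i hi1 him => [|k] // _ him /=.
  set e := y k.+1 - ystar.
  have e1 : y k.+1 + cd_a A r p k.+1 *: p k.+1 - ystar = e + cd_a A r p k.+1 *: p k.+1.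
    by rewrite /e addrAC.
  have Ae : A *m e = - r k.+1 by rewrite /e mulmxBr Hys rY // opprB.
  clearbody e.
  rewrite e1 mulmxDr -scalemxAr !dotvDl !dotvDr !dotvZl !dotvZr Ae.
  rewrite (dotv_sym e (p k.+1)) // Ae !dotvNl !dotvNr.
  have hn : normv (r k.+1) ^+ 4 = dotv (r k.+1) (r k.+1) ^+ 2.
    by rewrite /normv (_ : 4%N = (2 * 2)%N) // exprM sqr_sqrtr // dotv_ge0.
  have hv := hval k him.
  have akz := anz k (ltnW him).
  have dz := Hd k.+1 him.
  have hN : dotv (r k.+1) (r k.+1)
      = - (cd_a A r p k * dotv (p k.+1) (r k.+1)) / gamma k.
    by rewrite hv; field; apply: Hg.
  rewrite hn hN.
  move: akz hv hN; set ak := cd_a A r p k; clearbody ak => akz hv hN.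
  rewrite /cd_a (dotvC (r k.+1) (p k.+1)).
  by field; rewrite akz dz Hg.
- move=> X [H1 H2 H3 H4].
  have XAA : X *m A *m A = A.
    rewrite -H4 trmx_mul HA.
    by have := congr1 trmx H1; rewrite !trmx_mul HA mulmxA.
  have XAp : forall k, (k <= m)%N -> X *m A *m p k = p k /\ X *m A *m p k.-1 = p k.-1.
    elim=> [|k IH] hk.
      have -> : p 0%N = A *m (ystar - y 0%N) by rewrite Hp0 Hr0 mulmxBr Hys.
      by rewrite mulmxA XAA.
    split; last exact: (IH (ltnW hk)).1.
    have [I1 I2] := IH (ltnW hk).
    by rewrite (pstep k hk) !mulmxBr -!scalemxAr !mulmxA XAA I1 I2.
  have tel : forall k, (k <= m)%N -> \sum_(i < k.+1) cd_a A r p i *: p i = y k.+1 - y 0%N.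
    elim=> [|k IH] hk.
      by rewrite big_ord1 /= Hy // addrAC subrr add0r.
    by rewrite big_ord_recr /= IH ?(ltnW hk) // (Hy k.+1 hk) addrAC.
  rewrite mulmxBl mulmx_suml; apply/eqP; rewrite subr_eq0; apply/eqP.
  have -> : X *m r 0%N = \sum_(i < m.+1) cd_a A r p i *: p i.
    rewrite Hr0 -Hend -mulmxBr -tel // mulmxA mulmx_sumr.
    apply: eq_bigr => i _; rewrite -scalemxAr (XAp i (ltn_ord i)).1 //.
  apply: eq_bigr => i _.
  rewrite -scalemxAl -mulmxA.
  have -> : (p i)^T *m r 0%N = (dotv (p i) (r 0%N))%:M.
    by apply/matrixP => u v; rewrite !ord1 /dotv [in RHS]mxE eqxx mulr1n.
  rewrite mul_mx_scalar scalerA; congr (_ *: _).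
  have hi : (i <= m)%N := ltn_ord i.
  by rewrite -(pr0 i i) // /cd_a (dotvC (r i)) mulrC.
Qed.
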